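(* The ascending-price auction $G^*$ (defined in the context) is an incentive compatible gradual mechanism implementing the second-price auction rule.
   Context: General framework. Agents $N$ with finite type spaces $\Theta_i$, types inducing complete transitive preferences $R(\theta_i)$ over outcomes; an SCF $f$ maps type profiles to outcomes. A gradual mechanism (GM) implementing $f$ is a finite extensive game form with perfect recall (possibly simultaneous moves, all agents active at the initial history, information sets partitioning each agent's decision nodes, outcome function on terminal histories) in which each action of agent $i$ is a nonempty subset of $\Theta_i$, at each decision node of $i$ the available actions are pairwise disjoint with union equal to the last action of $i$ taken before (or $\Theta_i$ if none), and each terminal history $z$ receives outcome $f(\theta)$ for any $\theta$ in the product $\Theta(z)$ of the agents' last actions along $z$. A strategy $s_i$ is unconditional for $\theta_i$ if it chooses the action containing $\theta_i$ at every decision node of $i$ whose current report contains $\theta_i$. The GM is incentive compatible if for every agent $i$, type $\theta_i$, unconditional strategy $s_{\theta_i}$, strategy $s_i$ and profile $s_{-i}$ of others' strategies, the outcome under $(s_{\theta_i},s_{-i})$ is weakly preferred under $R(\theta_i)$ to that under $(s_i,s_{-i})$. Auction environment. Bidders $N=\{1,\dots,n\}$ ($n\ge2$), each with private value $v_i\in V=\{1,\dots,m\}$ ($m\ge2$), so $\Theta_i=V$. An outcome is a probability distribution over which bidder receives the item together with the price the winner pays; bidder $i$ with value $v_i$ ranks outcomes by expected payoff (probability of winning times $v_i$ minus the price paid upon winning). The second-price auction rule assigns to each value profile $v$ the outcome in which the item goes, with equal probability, to one of the bidders with the highest value, who pays the second-highest entry of $v$ (which equals the highest value if there is a tie at the top).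 Ascending-price auction $G^*$. Price levels $p=1,2,\dots$. At price $p=1$ all bidders are active; at price $p\ge2$ the active bidders are those who chose to stay at $p-1$. At price $p\le m-1$, active bidders move one at a time in increasing index order; each chooses ''stay'', i.e. the action $\{v\in V:v>p\}$, or ''leave'', i.e. $\{v\in V:v=p\}$ (their current report is $\{p,\dots,m\}$). After all active bidders have moved at $p$: if exactly one stayed, she wins and pays $p$; if none stayed, a uniformly random bidder among those who left at $p$ wins and pays $p$; if at least two stayed and $p<m-1$, the price rises to $p+1$; if at least two stayed and $p=m-1$, the price reaches $m$, the auction stops, and a uniformly random bidder among those who stayed at $m-1$ wins and pays $m$. Information: when bidder $i$ moves at price $p$, she knows all choices made at all earlier price levels; as to the choices of the bidders who moved before her at price $p$: if at least two of them stayed, she knows exactly their choices; otherwise she knows only that at most one of them stayed. That is, an information set of $i$ is a singleton unless it contains a history in which fewer than two earlier movers at price $p$ stayed, in which case it consists of all histories that coincide with it at all previous price levels and in which fewer than two earlier movers at price $p$ stayed. *)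

(* Defs.v *)
From mathcomp Require Import all_boot all_order all_algebra.
Set Implicit Arguments. Unset Strict Implicit. Unset Printing Implicit Defensive.
Import Order.TTheory GRing.Theory Num.Theory.

(* Values: V = {1,...,m}, represented by naturals v with 1 <= v <= m.
   Outcomes produced by the auction / the second-price rule: a pair (W, p)
   meaning "the item goes to a uniformly random member of W, who pays p". *)
Definition outcome (n : nat) := ({set 'I_n} * nat)%type.

(* Expected payoff of bidder i with value vi:
   Pr(i wins) * vi - (price paid upon winning) * Pr(i wins). *)
Definition payoff (n : nat) (i : 'I_n) (vi : nat) (o : outcome n) : rat :=
  if i \in o.1 then ((vi%:R - (o.2)%:R) / (#|o.1|)%:R)%R else 0%R.

Definition second_highest (n : nat) (v : 'I_n -> nat) : nat :=
  nth 0 (sort geq [seq v i | i <- enum 'I_n]) 1.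

Definition spa (n : nat) (v : 'I_n -> nat) : outcome n :=
  ([set i | v i == \max_j v j], second_highest v).

Definition current_report (m p : nat) : pred nat := [pred v | (p <= v) && (v <= m)].
Definition stay_act (m p : nat) : pred nat := [pred v | (p < v) && (v <= m)].
Definition leave_act (p : nat) : pred nat := [pred v | v == p].

Definition gm_action_structure (m : nat) : Prop :=
  forall p, 1 <= p < m ->
    [/\ (exists v, stay_act m p v), (exists v, leave_act p v),
        (forall v, ~~ (stay_act m p v && leave_act p v)),
        (forall v, current_report m p v = stay_act m p v || leave_act p v) &
        (forall v, current_report m p v =
                   if p == 1 then (1 <= v <= m) else stay_act m p.-1 v)].

(* An information set of bidder i at price p is described by
   - p,
   - the history of earlier price levels, given as the list
     hist = [A_1; ...; A_p] of active sets (A_{k+1} = those who stayed at k),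
   - the observation about earlier movers at price p: [Some S] (S = exact set
     of earlier movers who stayed) if at least two of them stayed, [None]
     otherwise ("at most one stayed").
   A (pure) strategy maps this to true (= stay, action {v > p}) or
   false (= leave, action {v = p}). *)
Definition strat (n : nat) := nat -> seq {set 'I_n} -> option {set 'I_n} -> bool.

Definition observe (n : nat) (S : {set 'I_n}) : option {set 'I_n} :=
  if 1 < #|S| then Some S else None.

(* Active bidders at price p (= last hist) move in increasing index order;
   S accumulates the stayers among those who already moved. *)
Definition stayers (n : nat) (s : 'I_n -> strat n) (p : nat) (hist : seq {set 'I_n})
    : {set 'I_n} :=
  foldl (fun S i => if (i \in last set0 hist) && s i p hist (observe S)
                    then i |: S else S) set0 (enum 'I_n).

(* Terminal history reached: [A_1; ...; A_p; St], where p is the last price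
   level at which bidders moved and St is the set of stayers at p. *)
Fixpoint run (n m : nat) (s : 'I_n -> strat n) (fuel p : nat) (hist : seq {set 'I_n})
    : seq {set 'I_n} :=
  let St := stayers s p hist in
  match fuel with
  | 0 => rcons hist St
  | f.+1 => if (1 < #|St|) && (p.+1 < m) then run m s f p.+1 (rcons hist St)
            else rcons hist St
  end.

Definition play (n m : nat) (s : 'I_n -> strat n) : seq {set 'I_n} :=
  run m s m 1 [:: setT].

Definition outcome_of (n m : nat) (z : seq {set 'I_n}) : outcome n :=
  let p := (size z).-1 in
  let St := last set0 z in
  let A := nth set0 z p.-1 in
  if #|St| == 1 then (St, p)
  else if St == set0 then (A, p)      (* nobody stayed: random among leavers at p *)
  else (St, m).                       (* >= 2 stayed at m-1: price m, random stayer *)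

(* Theta_i(z): bidder i's last action along the terminal history z.
   If i stayed at the final level p, it is {v in V | v > p};
   otherwise i left at level k = number of levels at which i was active
   (active sets are nested), and the action is {k}. *)
Definition Theta (n m : nat) (z : seq {set 'I_n}) (i : 'I_n) : pred nat :=
  [pred v | (1 <= v <= m) &&
     (if i \in last set0 z then (size z).-1 < v
      else v == count (fun A : {set 'I_n} => i \in A) z)].

(* Unconditional strategy for value vi: at every decision node (price p with
   1 <= p <= m-1) whose current report {p..m} contains vi, choose the action
   containing vi (stay iff vi > p). *)
Definition unconditional (n m vi : nat) (si : strat n) : Prop :=
  forall p hist o, 1 <= p < m -> p <= vi -> si p hist o = (p < vi).

Definition upd (n : nat) (s : 'I_n -> strat n) (i : 'I_n) (si : strat n) : 'I_n -> strat n :=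
  fun j => if j == i then si else s j.

(* Main.v *)
Require Import Defs.
From mathcomp Require Import all_boot all_order all_algebra.
From mathcomp Require Import zify ring lra.
Import Order.TTheory GRing.Theory Num.Theory.
Set Implicit Arguments. Unset Strict Implicit. Unset Printing Implicit Defensive.

Lemma cntE (T : finType) (P : pred T) : count P (enum T) = #|[set j | P j]|.
Proof. rewrite cardE /enum_mem size_filter count_filter. apply: eq_count => x. by rewrite /= !inE andbT.
Qed.

Lemma SH (n : nat) (v : 'I_n -> nat) x :
  1 < #|[set j | x <= v j]| -> #|[set j | x < v j]| <= 1 -> second_highest v = x.
Proof.
move=> H1 H2; rewrite /second_highest.
have cnt : forall P : pred nat, count P (sort geq [seq v i | i <- enum 'I_n]) = #|[set j | P (v j)]|.
  move=> P; rewrite (permP (permEl (perm_sort _ _))) count_map cntE.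
  by apply: eq_card => j; rewrite !inE.
have tot : total geq by move=> a b; exact: leq_total.
have srt := sort_sorted tot [seq v i | i <- enum 'I_n].
move: (cnt (fun y => x <= y)) (cnt (fun y => x < y)) srt.
case: (sort _ _) => [|a [|b t]] /=.
- by move=> E _ _; move: H1; rewrite -E.
- by move=> E _ _; move: H1; rewrite -E; case: (x <= a).
move=> E1 E2 /andP [ab pt].
have tt : transitive geq by move=> y z w h1 h2; exact: leq_trans h2 h1.
have /allP allt := order_path_min tt pt.
case: (ltngtP b x) => // hb.
- exfalso; move: H1; rewrite -E1.
  have -> : count (fun y => x <= y) t = 0.
    apply/eqP; rewrite -leqn0 leqNgt -has_count; apply/hasPn => y /allt /= yb.
    by rewrite -ltnNge (leq_ltn_trans yb hb).
  by rewrite (leqNgt x b) hb addn0; case: (x <= a).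
- exfalso; move: H2; rewrite -E2 hb (leq_trans hb ab).
  by rewrite !add1n ltnS.
Qed.

Section Fold.
Variable n : nat.
Definition Fst (s : 'I_n -> strat n) (p : nat) (hist : seq {set 'I_n}) :=
  fun (S : {set 'I_n}) (i : 'I_n) =>
    if (i \in last set0 hist) && s i p hist (observe S) then i |: S else S.

Lemma stayersE (s : 'I_n -> strat n) p hist : stayers s p hist = foldl (Fst s p hist) set0 (enum 'I_n).
Proof. by []. Qed.

Lemma fold_mono (s : 'I_n -> strat n) p hist (e : seq 'I_n) (S : {set 'I_n}) : S \subset foldl (Fst s p hist) S e.
Proof.
elim: e S => [|j e IH] S /=; first exact: subxx.
apply: subset_trans (IH _); rewrite /Fst; case: ifP => _ //; exact: subsetUr.
Qed.

Lemma fold_notin (s : 'I_n -> strat n) p hist (e : seq 'I_n) (S : {set 'I_n}) j : j \notin e ->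
  (j \in foldl (Fst s p hist) S e) = (j \in S).
Proof.
elim: e S => [|k e IH] S //=; rewrite inE negb_or => /andP [jk je].
rewrite IH // /Fst; case: ifP => _ //; by rewrite !inE (negbTE jk).
Qed.

Lemma fold_sub (s : 'I_n -> strat n) p hist (e : seq 'I_n) (S : {set 'I_n}) : S \subset last set0 hist ->
  foldl (Fst s p hist) S e \subset last set0 hist.
Proof.
elim: e S => [|k e IH] S //= HS; apply: IH; rewrite /Fst.
case: ifP => // /andP [hk _]; by rewrite subUset sub1set hk.
Qed.

Lemma fold_agree (F1 F2 : {set 'I_n} -> 'I_n -> {set 'I_n}) (e : seq 'I_n) S :
  (forall j S, j \in e -> F1 S j = F2 S j) -> foldl F1 S e = foldl F2 S e.
Proof.
elim: e S => [|k e IH] S //= H; rewrite H ?mem_head //; apply: IH => j S' je.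
by apply: H; rewrite inE je orbT.
Qed.

Lemma stayers_sub (s : 'I_n -> strat n) p hist : stayers s p hist \subset last set0 hist.
Proof. by rewrite stayersE; apply: fold_sub; exact: sub0set. Qed.

Lemma enum_split (i : 'I_n) : exists e1 e2,
  [/\ enum 'I_n = e1 ++ i :: e2, i \notin e1 & i \notin e2].
Proof.
have Hi : i \in enum 'I_n by rewrite mem_enum.
have U := enum_uniq 'I_n.
move: U; case/splitPr: Hi => e1 e2 U; exists e1, e2; split => //.
- by move: U; rewrite cat_uniq /= negb_or => /and3P [_ /andP [H _] _].
- by move: U; rewrite cat_uniq /= => /and3P [_ _ /andP [H _]].
Qed.

Lemma stayers_i (s : 'I_n -> strat n) p hist (i : 'I_n) e1 e2 :
  enum 'I_n = e1 ++ i :: e2 -> i \notin e1 -> i \notin e2 ->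
  (i \in stayers s p hist) =
  (i \in last set0 hist) && s i p hist (observe (foldl (Fst s p hist) set0 e1)).
Proof.
move=> E h1 h2; rewrite stayersE E foldl_cat /= fold_notin // /Fst.
case: ifP => H; first by rewrite setU11.
by rewrite fold_notin // inE.
Qed.

End Fold.

Lemma outcome_rcons n m (hist : seq {set 'I_n}) St : hist != [::] ->
  outcome_of m (rcons hist St) =
  if #|St| == 1 then (St, size hist)
  else if St == set0 then (last set0 hist, size hist) else (St, m).
Proof.
move=> hne; rewrite /outcome_of size_rcons last_rcons /=.
rewrite nth_rcons (_ : (size hist).-1 < size hist); last by case: hist hne.
by rewrite nth_last.
Qed.

Lemma run_step n m (s : 'I_n -> strat n) f p hist :
  run m s f.+1 p hist =
  if (1 < #|stayers s p hist|) && (p.+1 < m)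
  then run m s f p.+1 (rcons hist (stayers s p hist))
  else rcons hist (stayers s p hist).
Proof. by []. Qed.

Lemma run0 n m (s : 'I_n -> strat n) p hist :
  run m s 0 p hist = rcons hist (stayers s p hist).
Proof. by []. Qed.

Definition chain n (h : seq {set 'I_n}) := forall A, A \in h -> last set0 h \subset A.

Lemma run_term n m (s : 'I_n -> strat n) f p hist :
  0 < p -> p < m -> m <= p + f -> size hist = p -> 1 < #|last set0 hist| -> chain hist ->
  exists h St, [/\ run m s f p hist = rcons h St, 0 < size h, size h < m &
     1 < #|last set0 h|] /\ [/\ chain h, St \subset last set0 h
   & ~~ ((1 < #|St|) && ((size h).+1 < m))].
Proof.
elim: f p hist => [|f IH] p hist p0 pm mf sh c2 ch.
  exists hist, (stayers s p hist); rewrite run0 sh; split; split => //.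
  - exact: stayers_sub.
  - by apply/negP => /andP [_ h]; lia.
rewrite run_step; case: ifP => H.
  case/andP: H => H1 H2; apply: IH => //.
  - by rewrite addSnnS.
  - by rewrite size_rcons sh.
  - by rewrite last_rcons.
  - move=> A; rewrite last_rcons mem_rcons inE => /orP [/eqP -> //|AH].
    exact: subset_trans (stayers_sub _ _ _) (ch _ AH).
exists hist, (stayers s p hist); split; split => //; rewrite ?sh ?H //.
- exact: stayers_sub.
Qed.

Lemma cnt_lt n (h : seq {set 'I_n}) (i : 'I_n) : h != [::] -> i \notin last set0 h ->
  count (fun B : {set 'I_n} => i \in B) h < size h.
Proof.
case/lastP: h => [//|h x] _; rewrite last_rcons -cats1 count_cat size_cat /= => /negbTE -> /=.
have := count_size (fun B : {set 'I_n} => i \in B) h; simpl; lia.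
Qed.

Lemma maxE n (v : 'I_n -> nat) w : (forall j, v j <= v w) -> \max_j v j = v w.
Proof.
move=> H; apply/eqP; rewrite eqn_leq leq_bigmax andbT; apply/bigmax_leqP => j _; exact: H.
Qed.

Lemma impl_term n m (h : seq {set 'I_n}) (St : {set 'I_n}) (v : 'I_n -> nat) :
  0 < size h -> size h < m -> 1 < #|last set0 h| -> chain h -> St \subset last set0 h ->
  ~~ ((1 < #|St|) && ((size h).+1 < m)) ->
  (forall i, Theta m (rcons h St) i (v i)) ->
  outcome_of m (rcons h St) = spa v.
Proof.
move=> h0 hm c2 ch sub term HT.
have hne : h != [::] by apply/eqP => E; move: h0; rewrite E.
set q := size h in h0 hm term *; set A := last set0 h in c2 ch sub *.
have TH : forall i : 'I_n, (1 <= v i <= m) &&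
   (if i \in St then q < v i else v i == count (fun B : {set 'I_n} => i \in B) h).
  move=> i; move: (HT i); rewrite /Theta inE /= last_rcons size_rcons /=.
  by rewrite -cats1 count_cat /= addn0; case: (i \in St) => //; rewrite addn0.
have vSt : forall i, i \in St -> q < v i <= m.
  by move=> i iS; move: (TH i); rewrite iS => /andP [/andP [_ ->] ->].
have vA : forall i, i \in A -> i \notin St -> v i = q.
  move=> i iA iS; move: (TH i); rewrite (negbTE iS) => /andP [_ /eqP ->].
  apply/eqP; rewrite -all_count; apply/allP => B /ch hB; exact: (subsetP hB).
have vN : forall i, i \notin A -> v i < q.
  move=> i iA; have iS : i \notin St by apply: contra iA; apply: (subsetP sub).
  move: (TH i); rewrite (negbTE iS) => /andP [_ /eqP ->]; exact: cnt_lt.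
have vle : forall j, j \notin St -> v j <= q.
  move=> j jS; case: (boolP (j \in A)) => jA; first by rewrite vA.
  exact: ltnW (vN _ jA).
have vm : forall j, v j <= m.
  move=> j; case: (boolP (j \in St)) => jS; first by case/andP: (vSt _ jS).
  exact: leq_trans (vle _ jS) (ltnW hm).
rewrite outcome_rcons // /spa.
case: ifP => [/cards1P [w Hw] | H1].
  have wS : w \in St by rewrite Hw set11.
  have vw := vSt _ wS; case/andP: vw => qw _.
  have oth : forall j, j != w -> v j <= q.
    by move=> j jw; apply: vle; rewrite Hw inE.
  have mx : \max_j v j = v w.
    apply: maxE => j; case: (eqVneq j w) => [->//|jw].
    exact: ltnW (leq_ltn_trans (oth _ jw) qw).
  congr pair.
    apply/setP => j; rewrite Hw !inE mx; case: (eqVneq j w) => [->|jw]; first by rewrite eqxx.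
    by apply/esym/negbTE; rewrite neq_ltn (leq_ltn_trans (oth _ jw) qw).
  symmetry; apply: SH.
    case/card_gt1P: c2 => x [y [xA yA xy]].
    have [a [aA aw]] : exists a, a \in A /\ a != w.
      case: (eqVneq x w) => [xw|xw]; last by exists x.
      by exists y; split => //; rewrite -xw eq_sym.
    apply/card_gt1P; exists w, a; rewrite !inE (ltnW qw) vA //; last by rewrite Hw inE.
    by split => //; rewrite eq_sym.
  rewrite -(cards1 w); apply: subset_leq_card; apply/subsetP => j; rewrite !inE => hj.
  by case: (eqVneq j w) => // jw; move: (oth _ jw); rewrite leqNgt hj.
case: ifP => [/eqP S0 | H2].
  have vle' : forall j, v j <= q by move=> j; apply: vle; rewrite S0 inE.
  case/card_gt1P: (c2) => x [y [xA yA xy]].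
  have xS : x \notin St by rewrite S0 inE.
  have yS : y \notin St by rewrite S0 inE.
  have mx : \max_j v j = v x by apply: maxE => j; rewrite (vA x xA xS); exact: vle'.
  congr pair.
    apply/setP => j; rewrite !inE mx (vA x xA xS).
    case: (boolP (j \in A)) => jA; first by rewrite vA ?S0 ?inE // eqxx.
    by apply/esym/negbTE; rewrite neq_ltn vN.
  symmetry; apply: SH.
    by apply/card_gt1P; exists x, y; rewrite !inE (vA x xA xS) (vA y yA yS).
  rewrite (_ : [set j | q < v j] = set0) ?cards0 //.
  by apply/setP => j; rewrite !inE ltnNge vle'.
have c1 : 1 < #|St|.
  have : #|St| != 0 by rewrite cards_eq0 H2.
  by move: H1; case: #|St| => [|[|k]].
have qm : q.+1 = m by move: term; rewrite c1 /= -leqNgt => H; apply/eqP; rewrite eqn_leq H hm.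
case/card_gt1P: (c1) => x [y [xS yS xy]].
have vSm : forall j, j \in St -> v j = m.
  by move=> j jS; case/andP: (vSt _ jS) => a b; apply/eqP; rewrite eqn_leq b -qm.
have mx : \max_j v j = m.
  rewrite (@maxE _ _ x) ?vSm // => j; rewrite vSm //.
congr pair.
  apply/setP => j; rewrite !inE mx; case: (boolP (j \in St)) => jS; first by rewrite vSm ?eqxx.
  by apply/esym/negbTE; rewrite neq_ltn -qm ltnS vle.
symmetry; apply: SH.
  by apply/card_gt1P; exists x, y; rewrite !inE !vSm.
rewrite (_ : [set j | m < v j] = set0) ?cards0 //.
by apply/setP => j; rewrite !inE ltnNge vm.
Qed.

Lemma payoff_ge0 n (i : 'I_n) vi (o : outcome n) :
  (i \in o.1 -> o.2 <= vi) -> (0 <= payoff i vi o)%R.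
Proof.
rewrite /payoff; case: ifP => // iw H; apply: divr_ge0; last exact: ler0n.
by rewrite subr_ge0 ler_nat H.
Qed.

Lemma payoff_le0 n (i : 'I_n) vi (o : outcome n) :
  vi <= o.2 -> (payoff i vi o <= 0)%R.
Proof.
rewrite /payoff; case: ifP => // iw H; apply: mulr_le0_ge0; last by rewrite invr_ge0 ler0n.
by rewrite subr_le0 ler_nat.
Qed.

Lemma size_run n m (s : 'I_n -> strat n) f p hist :
  size hist < size (run m s f p hist).
Proof.
elim: f p hist => [|f IH] p hist; first by rewrite run0 size_rcons.
rewrite run_step; case: ifP => _; last by rewrite size_rcons.
apply: leq_trans (IH _ _); by rewrite size_rcons.
Qed.

Lemma price_run n m (s : 'I_n -> strat n) f p hist :
  size hist = p -> p <= m -> p <= (outcome_of m (run m s f p hist)).2.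
Proof.
move=> sh pm; have := size_run m s f p hist; rewrite sh.
rewrite /outcome_of; set z := run _ _ _ _ _ => hz.
have hz' : p <= (size z).-1 by move: hz; case: (size z).
by case: ifP => _ //=; case: ifP.
Qed.

Lemma winner_run n m (s : 'I_n -> strat n) f p (hist : seq {set 'I_n}) :
  hist != [::] -> (outcome_of m (run m s f p hist)).1 \subset last set0 hist.
Proof.
elim: f p hist => [|f IH] p hist hne.
  rewrite run0 outcome_rcons //; have := stayers_sub s p hist.
  by case: ifP => _ //; case: ifP => _ //.
rewrite run_step; case: ifP => _.
  apply: subset_trans (IH _ _ _) _; first by rewrite -size_eq0 size_rcons.
  by rewrite last_rcons; exact: stayers_sub.
rewrite outcome_rcons //; have := stayers_sub s p hist.
by case: ifP => _ //; case: ifP => _ //.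
Qed.

Lemma stay_true n m vi (s : 'I_n -> strat n) (i : 'I_n) p hist :
  unconditional m vi (s i) -> 0 < p < m -> (i \in last set0 hist -> p <= vi) ->
  i \in stayers s p hist -> p < vi.
Proof.
move=> U pm Hv; have [e1 [e2 [E h1 h2]]] := enum_split i.
rewrite (stayers_i _ _ _ E h1 h2) => /andP [iA].
by rewrite U // Hv.
Qed.

Lemma term_nonneg n m vi (s : 'I_n -> strat n) (i : 'I_n) p hist :
  unconditional m vi (s i) -> 0 < p < m -> (i \in last set0 hist -> p <= vi) ->
  size hist = p -> ~~ ((1 < #|stayers s p hist|) && (p.+1 < m)) ->
  (0 <= payoff i vi (outcome_of m (rcons hist (stayers s p hist))))%R.
Proof.
move=> U pm Hv sh term.
have hne : hist != [::] by apply/eqP => E; move: pm; rewrite -sh E.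
have ST := stay_true U pm Hv.
rewrite outcome_rcons //; apply: payoff_ge0.
case: ifP => c1 /=; first by rewrite sh => /ST /ltnW.
case: ifP => c0 /=; first by rewrite sh.
move=> iS; have := ST iS.
have : 1 < #|stayers s p hist|.
  have : #|stayers s p hist| != 0 by rewrite cards_eq0 c0.
  by move: c1; case: #|_| => [|[|k]].
move: term => /[swap] -> /= ; rewrite -leqNgt; lia.
Qed.

Lemma truthful_nonneg n m vi (s : 'I_n -> strat n) (i : 'I_n) f p hist :
  unconditional m vi (s i) -> 0 < p < m -> m <= p + f ->
  (i \in last set0 hist -> p <= vi) -> size hist = p ->
  (0 <= payoff i vi (outcome_of m (run m s f p hist)))%R.
Proof.
move=> U; elim: f p hist => [|f IH] p hist pm mf Hv sh.
  rewrite run0; apply: term_nonneg => //; apply/negP => /andP [_ h]; lia.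
rewrite run_step; case: ifP => H; last by apply: term_nonneg => //; rewrite H.
case/andP: H => H1 H2; apply: IH.
- by rewrite H2 andbT.
- lia.
- by rewrite last_rcons => /(stay_true U pm Hv).
- by rewrite size_rcons sh.
Qed.

Lemma observe0 n : observe (set0 : {set 'I_n}) = None.
Proof. by rewrite /observe cards0. Qed.

Lemma observe1 n (i : 'I_n) : observe [set i] = None.
Proof. by rewrite /observe cards1. Qed.

Lemma fold_single n (s1 s2 : 'I_n -> strat n) (i : 'I_n) p hist (e : seq 'I_n) :
  (forall j, j != i -> s1 j = s2 j) -> i \notin e ->
  foldl (Fst s1 p hist) set0 e = set0 -> foldl (Fst s2 p hist) [set i] e = [set i].
Proof.
move=> Hs; elim: e => [//|j e IH] /=; rewrite inE negb_or => /andP [ij ie] H.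
have ji : j != i by rewrite eq_sym.
have F1 : Fst s1 p hist set0 j = set0.
  rewrite /Fst; case E1 : ((j \in last set0 hist) && s1 j p hist (observe set0)) => //.
  have eq1 : Fst s1 p hist set0 j = j |: set0 by rewrite /Fst E1.
  rewrite eq1 in H.
  by have := fold_mono s1 p hist e (j |: set0); rewrite H => /subsetP /(_ j); rewrite !inE eqxx => /(_ isT).
move: H; rewrite F1 => H.
suff -> : Fst s2 p hist [set i] j = [set i] by exact: IH.
move: F1; rewrite /Fst observe1 -(observe0 n) Hs //.
case: ifP => // _ /setP /(_ j); by rewrite !inE eqxx.
Qed.

Lemma step_cases n m vi (s1 s2 : 'I_n -> strat n) (i : 'I_n) p hist :
  (forall j, j != i -> s1 j = s2 j) -> unconditional m vi (s2 i) ->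
  0 < p < m -> (i \in last set0 hist -> p <= vi) ->
  stayers s1 p hist = stayers s2 p hist \/
  (p < vi /\ i \notin stayers s1 p hist /\
     (stayers s1 p hist = set0 -> stayers s2 p hist = [set i])) \/
  (i \in last set0 hist /\ vi <= p).
Proof.
move=> Hs U pm Hv; have [e1 [e2 [E h1 h2]]] := enum_split i.
have ne : forall (e : seq 'I_n) j, i \notin e -> j \in e -> j != i.
  by move=> e j ie je; apply/eqP => ji; move: ie; rewrite -ji je.
have A1 : foldl (Fst s1 p hist) set0 e1 = foldl (Fst s2 p hist) set0 e1.
  by apply: fold_agree => j S je; rewrite /Fst Hs // (ne e1).
have A2 : forall X, foldl (Fst s1 p hist) X e2 = foldl (Fst s2 p hist) X e2.
  by move=> X; apply: fold_agree => j S je; rewrite /Fst Hs // (ne e2).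
have SE : forall s, stayers s p hist =
    foldl (Fst s p hist) (Fst s p hist (foldl (Fst s p hist) set0 e1) i) e2.
  by move=> s; rewrite stayersE E foldl_cat.
set S0 := foldl (Fst s2 p hist) set0 e1 in A1.
case: (boolP (i \in last set0 hist)) => iA; last first.
  by left; rewrite !SE A1 A2 /Fst (negbTE iA).
case: (eqVneq (s1 i p hist (observe S0)) (s2 i p hist (observe S0))) => Hd.
  by left; rewrite !SE A1 A2 /Fst Hd.
have pv := Hv iA; rewrite U // in Hd.
case: (ltnP p vi) => pv'; last by right; right.
rewrite pv' in Hd; have Hd' : s1 i p hist (observe S0) = false by case: (s1 _ _ _ _) Hd.
right; left; split => //; split.
  by rewrite (stayers_i _ _ _ E h1 h2) A1 Hd' andbF.
have eq1 : Fst s1 p hist S0 i = S0 by rewrite /Fst iA Hd'.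
have eq2 : Fst s2 p hist S0 i = i |: S0 by rewrite /Fst iA U // pv'.
rewrite !SE A1 eq1 eq2 => H.
have S00 : S0 = set0.
  by apply/eqP; rewrite -subset0 -H; apply: fold_mono.
rewrite S00 in H; rewrite S00 setU0; exact: (fold_single Hs h2 H).
Qed.

Lemma term_win n m (hist : seq {set 'I_n}) (St : {set 'I_n}) (i : 'I_n) :
  i \notin St -> hist != [::] -> i \in (outcome_of m (rcons hist St)).1 -> St = set0.
Proof.
move=> iS hne; rewrite outcome_rcons //; case: ifP => _ /=; first by rewrite (negbTE iS).
by case: ifP => [/eqP //|_ /=]; rewrite (negbTE iS).
Qed.

Lemma caseB n m vi (s1 s2 : 'I_n -> strat n) (i : 'I_n) f p hist :
  unconditional m vi (s2 i) ->
  0 < p < m -> m <= p + f -> (i \in last set0 hist -> p <= vi) -> size hist = p ->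
  vi <= p ->
  (payoff i vi (outcome_of m (run m s1 f p hist)) <=
   payoff i vi (outcome_of m (run m s2 f p hist)))%R.
Proof.
move=> U pm mf Hv sh vp.
have h1 : (payoff i vi (outcome_of m (run m s1 f p hist)) <= 0)%R.
  have pm' : p <= m by case/andP: pm => _ /ltnW.
  apply: payoff_le0; exact: leq_trans vp (@price_run _ m s1 f p hist sh pm').
have h2 : (0 <= payoff i vi (outcome_of m (run m s2 f p hist)))%R by exact: truthful_nonneg.
exact: le_trans h1 h2.
Qed.

Lemma caseA n m vi (s1 s2 : 'I_n -> strat n) (i : 'I_n) f p hist :
  unconditional m vi (s2 i) ->
  0 < p < m -> m <= p + f -> (i \in last set0 hist -> p <= vi) -> size hist = p ->
  p < vi -> i \notin stayers s1 p hist ->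
  (stayers s1 p hist = set0 -> stayers s2 p hist = [set i]) ->
  (payoff i vi (outcome_of m (run m s1 f p hist)) <=
   payoff i vi (outcome_of m (run m s2 f p hist)))%R.
Proof.
move=> U pm mf Hv sh pv iS1 H0.
have hne : hist != [::] by apply/eqP => E; move: pm; rewrite -sh E.
case: (boolP (i \in (outcome_of m (run m s1 f p hist)).1)) => iw; last first.
  have -> : payoff i vi (outcome_of m (run m s1 f p hist)) = 0%R by rewrite /payoff (negbTE iw).
  exact: truthful_nonneg.
have [S1 z1] : stayers s1 p hist = set0 /\ run m s1 f p hist = rcons hist set0.
  case: f {mf} iw => [|f] iw.
    by rewrite run0 in iw *; have S1 := term_win iS1 hne iw; rewrite S1.
  rewrite run_step in iw *; move: iw; case: ifP => H iw.
    have := @winner_run _ m s1 f p.+1 (rcons hist (stayers s1 p hist)).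
    rewrite last_rcons -size_eq0 size_rcons => /(_ isT) /subsetP /(_ i iw) iS; by rewrite iS in iS1.
  by have S1 := term_win iS1 hne iw; rewrite S1.
have z2 : run m s2 f p hist = rcons hist [set i].
  by case: f {mf iw z1} => [|f]; rewrite ?run0 ?run_step H0 // cards1.
move: iw; rewrite z1 z2 !outcome_rcons //.
rewrite cards0 cards1 /=; case: ifP => [_ /= iA|/eqP //].
rewrite /payoff /= iA set11 cards1 divr1 sh.
have c0 : 0 < #|last set0 hist| by apply/card_gt0P; exists i.
apply: ler_piMr; first by rewrite subr_ge0 ler_nat ltnW.
by rewrite invf_le1 ?ltr0n // ler1n.
Qed.

Lemma IC_run n m vi (s1 s2 : 'I_n -> strat n) (i : 'I_n) f p hist :
  (forall j, j != i -> s1 j = s2 j) -> unconditional m vi (s2 i) ->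
  0 < p < m -> m <= p + f -> (i \in last set0 hist -> p <= vi) -> size hist = p ->
  (payoff i vi (outcome_of m (run m s1 f p hist)) <=
   payoff i vi (outcome_of m (run m s2 f p hist)))%R.
Proof.
move=> Hs U; elim: f p hist => [|f IH] p hist pm mf Hv sh;
  (case: (step_cases Hs U pm Hv) => [Eq|[[pv [iS1 H0]]|[iA vp]]];
   [idtac | exact: caseA | exact: caseB]).
  by rewrite !run0 Eq.
rewrite !run_step Eq; case: ifP => // /andP [H1 H2]; apply: IH.
- by rewrite H2 andbT.
- lia.
- by rewrite last_rcons => /(stay_true U pm Hv).
- by rewrite size_rcons sh.
Qed.

Theorem proposition9 (n m : nat) (hn : 2 <= n) (hm : 2 <= m) :
  gm_action_structure m /\
  (* implementation: each terminal history z yields spa v for all v in Theta(z) *)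
  (forall (s : 'I_n -> strat n) (v : 'I_n -> nat),
      (forall i, Theta m (play m s) i (v i)) ->
      outcome_of m (play m s) = spa v) /\
  (* incentive compatibility *)
  (forall (i : 'I_n) (vi : nat), 1 <= vi <= m ->
    forall sT : strat n, unconditional m vi sT ->
    forall (si : strat n) (s : 'I_n -> strat n),
      (payoff i vi (outcome_of m (play m (upd s i si)))
       <= payoff i vi (outcome_of m (play m (upd s i sT))))%R).
Proof.
split.
  move=> p /andP [p1 pm]; split.
  - by exists m; rewrite /stay_act /=; lia.
  - by exists p; rewrite /leave_act /=; lia.
  - move=> v; rewrite /stay_act /leave_act /=; apply/negP => /andP [/andP [h _] /eqP e]; lia.
  - move=> v; rewrite /current_report /stay_act /leave_act /=; apply/idP/idP => H; lia.
  - move=> v; rewrite /current_report /stay_act /=; case: eqP => [->|pn] /=; apply/idP/idP => H; lia.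
split.
  move=> s v HT.
  have c2 : 1 < #|last set0 [:: (setT : {set 'I_n})]| by rewrite /= cardsT card_ord.
  have ch0 : chain [:: (setT : {set 'I_n})].
    by move=> A; rewrite inE => /eqP ->; exact: subxx.
  have [h [St [[E h0 hm' c2' ] [ch sub term]]]] :=
    @run_term n m s m 1 [:: setT] isT hm (leq_addl _ _) erefl c2 ch0.
  by rewrite /play E in HT *; apply: impl_term.
move=> i vi hvi sT U si s; apply: IC_run.
- by move=> j ji; rewrite /upd (negbTE ji).
- by rewrite /upd eqxx.
- by rewrite /= (leq_trans (isT : 1 < 2) hm).
- exact: leq_addl.
- by case/andP: hvi.
- by [].
Qed.
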